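(* Consider the noisy Hegselmann–Krause model with homogeneously stubborn agents described in the context, with confidence bound $\epsilon\in(0,1]$ and noise bound $\delta$ satisfying $0<\delta\le\frac{\epsilon}{2(n+1)}$. Suppose that almost surely there is a finite (possibly random) time $T\ge0$ such that $d_{\mathcal{V}}^{B_1}(T):=\max_{i\in\mathcal{V}}|x_i(T)-B_1|\le(n+1)\delta$. Then almost surely $d_{\mathcal{V}}\le 2\delta$ and $d_{\mathcal{V}}^{B_1}\le(n+1)\delta$, where $d_{\mathcal{V}}=\limsup_{t\to\infty}\max_{i,j\in\mathcal{V}}|x_i(t)-x_j(t)|$ and $d_{\mathcal{V}}^{B_1}=\limsup_{t\to\infty}\max_{i\in\mathcal{V}}|x_i(t)-B_1|$.
   Context: Regular agents: $\mathcal{V}=\{1,\dots,n\}$, with opinions $x_i(t)\in[0,1]$, $t=0,1,2,\dots$. Stubborn agents: a finite nonempty index set $\mathcal{B}_1$ disjoint from $\mathcal{V}$, with $x_k(t)\equiv B_1$ for all $k\in\mathcal{B}_1$ and all $t\ge0$, where $B_1\in[0,1]$ is fixed. For $i\in\mathcal{V}$, the neighbor set is $\mathcal{N}(i,x(t))=\{j\in\mathcal{V}\cup\mathcal{B}_1: |x_j(t)-x_i(t)|\le\epsilon\}$ (it contains $i$). The update for $i\in\mathcal{V}$ is $x_i^*(t)=|\mathcal{N}(i,x(t))|^{-1}\sum_{j\in\mathcal{N}(i,x(t))}x_j(t)+\xi_i(t+1)$, and $x_i(t+1)=1$ if $x_i^*(t)>1$, $x_i(t+1)=x_i^*(t)$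 if $x_i^*(t)\in[0,1]$, $x_i(t+1)=0$ if $x_i^*(t)<0$. The noises $\{\xi_i(t)\}_{i\in\mathcal{V},t\ge1}$ are i.i.d. real random variables with $E\xi_1(1)=0$, $E\xi_1(1)^2>0$ and $|\xi_1(1)|\le\delta$ almost surely. *)

(* Defs.v *)
From Stdlib Require Import Reals List.
Import ListNotations.
Open Scope R_scope.

(* Regular agents are indexed 0..n-1 (paper: 1..n); a state is x : nat -> R,
   only x i for i < n is relevant.  The m >= 1 stubborn agents all sit at B1. *)

Definition nbr_sum (n m : nat) (eps B1 : R) (x : nat -> R) (i : nat) : R :=
  fold_right Rplus 0
    (map (fun j => if Rle_dec (Rabs (x j - x i)) eps then x j else 0) (seq 0 n))
  + (if Rle_dec (Rabs (B1 - x i)) eps then INR m * B1 else 0).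

Definition nbr_card (n m : nat) (eps B1 : R) (x : nat -> R) (i : nat) : R :=
  fold_right Rplus 0
    (map (fun j => if Rle_dec (Rabs (x j - x i)) eps then 1 else 0) (seq 0 n))
  + (if Rle_dec (Rabs (B1 - x i)) eps then INR m else 0).

Definition clip01 (y : R) : R :=
  if Rlt_dec 1 y then 1 else if Rlt_dec y 0 then 0 else y.

Definition hk_trajectory (n m : nat) (eps B1 : R) (xi : nat -> nat -> R)
    (x : nat -> nat -> R) : Prop :=
  (forall i, (i < n)%nat -> 0 <= x 0%nat i <= 1) /\
  forall t i, (i < n)%nat ->
    x (S t) i = clip01 (nbr_sum n m eps B1 (x t) i / nbr_card n m eps B1 (x t) i
                        + xi (S t) i).

(* max_{i in V} |x_i - B1|  (all terms are >= 0, so 0 is a neutral default) *)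
Definition dev_B (n : nat) (B1 : R) (x : nat -> R) : R :=
  fold_right Rmax 0 (map (fun i => Rabs (x i - B1)) (seq 0 n)).

Definition diam (n : nat) (x : nat -> R) : R :=
  fold_right Rmax 0
    (flat_map (fun i => map (fun j => Rabs (x i - x j)) (seq 0 n)) (seq 0 n)).

Definition limsup_le (a : nat -> R) (c : R) : Prop :=
  forall e, 0 < e -> exists N, forall t, (N <= t)%nat -> a t <= c + e.

(* Main.v *)
Require Import Defs.
From Stdlib Require Import Reals List Lra Lia.
Open Scope R_scope.

Lemma fmax_le (l : list R) c : 0 <= c -> (forall a, In a l -> a <= c) ->
  fold_right Rmax 0 l <= c.
Proof.
  intros Hc; induction l as [|a l IH]; simpl; intros H; auto.
  apply Rmax_lub; auto.
Qed.

Lemma fmax_ge (l : list R) a : In a l -> a <= fold_right Rmax 0 l.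
Proof.
  induction l as [|b l IH]; simpl; [tauto|].
  intros [<-|H]. apply Rmax_l. eapply Rle_trans; [apply IH; auto| apply Rmax_r].
Qed.

Lemma clip_B (y B : R) : 0 <= B <= 1 -> Rabs (clip01 y - B) <= Rabs (y - B).
Proof.
  intros HB; unfold clip01.
  destruct (Rlt_dec 1 y); [|destruct (Rlt_dec y 0)]; try lra;
  unfold Rabs; repeat destruct Rcase_abs; lra.
Qed.

Lemma clip_lip (y z : R) : Rabs (clip01 y - clip01 z) <= Rabs (y - z).
Proof.
  unfold clip01.
  destruct (Rlt_dec 1 y); destruct (Rlt_dec y 0); destruct (Rlt_dec 1 z);
  destruct (Rlt_dec z 0); unfold Rabs; repeat destruct Rcase_abs; lra.
Qed.

Lemma sum_dev (f : nat -> R) (l : list nat) B D :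
  (forall j, In j l -> Rabs (f j - B) <= D) ->
  Rabs (fold_right Rplus 0 (map f l) - INR (length l) * B) <= INR (length l) * D.
Proof.
  induction l as [|a l IH]; cbn [fold_right map length]; intros H.
  - simpl; rewrite Rmult_0_l, Rminus_0_r, Rabs_R0; lra.
  - rewrite S_INR.
    replace (f a + fold_right Rplus 0 (map f l) - (INR (length l) + 1) * B)
      with ((f a - B) + (fold_right Rplus 0 (map f l) - INR (length l) * B)) by ring.
    eapply Rle_trans; [apply Rabs_triang|].
    pose proof (H a (or_introl eq_refl)).
    pose proof (IH (fun j Hj => H j (or_intror Hj))). lra.
Qed.

Lemma sum_if (f g : nat -> R) (P : nat -> Prop) (dec : forall j, {P j} + {~ P j}) l :
  (forall j, In j l -> P j) ->
  fold_right Rplus 0 (map (fun j => if dec j then f j else g j) l)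
  = fold_right Rplus 0 (map f l).
Proof.
  induction l as [|a l IH]; simpl; intros H; auto.
  destruct (dec a) as [_|Hn]; [|exfalso; apply Hn; auto].
  rewrite IH; auto.
Qed.

Lemma sum_one (l : list nat) : fold_right Rplus 0 (map (fun _ => 1) l) = INR (length l).
Proof.
  induction l as [|a l IH]; cbn [fold_right map length]; auto. rewrite IH, S_INR; lra.
Qed.

Section Main.
Variables (n m : nat) (eps delta B1 : R) (xi : nat -> nat -> R) (x : nat -> nat -> R).
Hypothesis Hm : (1 <= m)%nat.
Hypothesis HB : 0 <= B1 <= 1.
Hypothesis Heps : 0 < eps <= 1.
Hypothesis Hdel : 0 < delta <= eps / (2 * (INR n + 1)).
Hypothesis Hxi : forall t i, (i < n)%nat -> Rabs (xi t i) <= delta.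
Hypothesis Htr : hk_trajectory n m eps B1 xi x.

Let D := (INR n + 1) * delta.
Definition Pt t := forall i, (i < n)%nat -> Rabs (x t i - B1) <= D.

Lemma tri a b : Rabs (a - b) <= Rabs a + Rabs b.
Proof. unfold Rminus; rewrite <- (Rabs_Ropp b); apply Rabs_triang. Qed.

Lemma D_le : 2 * D <= eps.
Proof.
  unfold D. destruct Hdel as [H1 H2].
  assert (Hn : 0 < INR n + 1) by (pose proof (pos_INR n); lra).
  assert (delta * (2 * (INR n + 1)) <= eps).
  { apply (Rmult_le_compat_r (2 * (INR n + 1))) in H2; [|lra].
    unfold Rdiv in H2. rewrite Rmult_assoc, Rinv_l in H2; lra. }
  lra.
Qed.

Lemma avg t i : Pt t -> (i < n)%nat ->
  exists a, Rabs (a - B1) <= INR n * delta /\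
   x (S t) i = clip01 (a + xi (S t) i) /\
   a = (fold_right Rplus 0 (map (x t) (seq 0 n)) + INR m * B1) / (INR n + INR m).
Proof.
  intros HP Hi.
  pose proof D_le as HD.
  assert (HD0 : 0 <= D) by (unfold D; pose proof (pos_INR n); nra).
  destruct Htr as [_ Hstep]. rewrite Hstep by auto.
  set (S0 := fold_right Rplus 0 (map (x t) (seq 0 n))).
  assert (Hin : forall j, In j (seq 0 n) -> Rabs (x t j - x t i) <= eps).
  { intros j Hj. apply in_seq in Hj.
    pose proof (HP j ltac:(lia)). pose proof (HP i Hi).
    pose proof (tri (x t j - B1) (x t i - B1)).
    replace (x t j - B1 - (x t i - B1)) with (x t j - x t i) in * by ring. lra. }
  assert (HB1 : Rabs (B1 - x t i) <= eps).
  { rewrite Rabs_minus_sym. pose proof (HP i Hi). lra. }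
  unfold nbr_sum, nbr_card.
  rewrite (sum_if (x t) (fun _ => 0) _ (fun j => Rle_dec (Rabs (x t j - x t i)) eps)) by auto.
  rewrite (sum_if (fun _ => 1) (fun _ => 0) _ (fun j => Rle_dec (Rabs (x t j - x t i)) eps)) by auto.
  rewrite sum_one, length_seq.
  destruct (Rle_dec (Rabs (B1 - x t i)) eps) as [_|Hn]; [|lra].
  eexists; split; [|split; [reflexivity|reflexivity]].
  fold S0.
  assert (Hm1 : 1 <= INR m) by (apply (le_INR 1); auto).
  pose proof (pos_INR n) as Hn0.
  pose proof (sum_dev (x t) (seq 0 n) B1 D) as Hs. rewrite length_seq in Hs.
  specialize (Hs (fun j Hj => HP j ltac:(apply in_seq in Hj; lia))). fold S0 in Hs.
  set (k := INR n + INR m).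
  assert (Hk : 0 < k) by (unfold k; lra).
  apply (Rmult_le_reg_r k); auto.
  replace (S0 - INR n * B1) with (((S0 + INR m * B1) / k - B1) * k) in Hs
    by (unfold k; field; lra).
  rewrite Rabs_mult, (Rabs_pos_eq k) in Hs by lra.
  eapply Rle_trans; [exact Hs|]. unfold D, k. destruct Hdel. assert (INR n * ((INR n + 1) * delta) <= INR n * delta * (INR n + INR m)) by (apply Rle_trans with (INR n * delta * (INR n + 1)); [lra| apply Rmult_le_compat_l; nra]). lra.
Qed.

Lemma inv T : Pt T -> forall k, Pt (k + T).
Proof.
  intros HT k; induction k as [|k IH]; simpl; auto.
  intros i Hi. destruct (avg (k + T) i IH Hi) as [a [Ha [Hx _]]].
  rewrite Hx. eapply Rle_trans; [apply clip_B; auto|].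
  pose proof (tri (a - B1) (- xi (S (k + T)) i)).
  replace (a - B1 - - xi (S (k + T)) i) with (a + xi (S (k + T)) i - B1) in * by ring.
  rewrite Rabs_Ropp in *. pose proof (Hxi (S (k + T)) i Hi). unfold D. lra.
Qed.

Lemma diam_step t : Pt t -> diam n (x (S t)) <= 2 * delta.
Proof.
  intros HP. unfold diam. apply fmax_le; [destruct Hdel; lra|].
  intros v Hv. apply in_flat_map in Hv as [i [Hi Hv]]. apply in_map_iff in Hv as [j [<- Hj]].
  apply in_seq in Hi, Hj.
  destruct (avg t i HP ltac:(lia)) as [a [_ [Hxa Ha]]].
  destruct (avg t j HP ltac:(lia)) as [b [_ [Hxb Hb]]].
  rewrite Hxa, Hxb. subst a b.
  eapply Rle_trans; [apply clip_lip|].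
  set (q := (fold_right Rplus 0 (map (x t) (seq 0 n)) + INR m * B1) / (INR n + INR m)).
  replace (q + xi (S t) i - (q + xi (S t) j)) with (xi (S t) i - xi (S t) j) by ring.
  pose proof (tri (xi (S t) i) (xi (S t) j)).
  pose proof (Hxi (S t) i ltac:(lia)). pose proof (Hxi (S t) j ltac:(lia)). lra.
Qed.

Lemma devB_bound t : Pt t -> dev_B n B1 (x t) <= D.
Proof.
  intros HP. unfold dev_B. apply fmax_le.
  - unfold D; destruct Hdel; pose proof (pos_INR n); nra.
  - intros v Hv. apply in_map_iff in Hv as [i [<- Hi]]. apply in_seq in Hi. apply HP; lia.
Qed.

Lemma Pt_of t : dev_B n B1 (x t) <= D -> Pt t.
Proof.
  intros H i Hi. eapply Rle_trans; [|exact H]. unfold dev_B. apply fmax_ge.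
  apply in_map_iff. exists i; split; auto. apply in_seq; lia.
Qed.

End Main.

Theorem lemma3 (n m : nat) (eps delta B1 : R)
  (xi : nat -> nat -> R) (x : nat -> nat -> R) :
  (1 <= m)%nat ->
  0 <= B1 <= 1 ->
  0 < eps <= 1 ->
  0 < delta <= eps / (2 * (INR n + 1)) ->
  (forall t i, (i < n)%nat -> Rabs (xi t i) <= delta) ->
  hk_trajectory n m eps B1 xi x ->
  (exists T : nat, dev_B n B1 (x T) <= (INR n + 1) * delta) ->
  limsup_le (fun t => diam n (x t)) (2 * delta) /\
  limsup_le (fun t => dev_B n B1 (x t)) ((INR n + 1) * delta).
Proof.
  intros Hm HB Heps Hdel Hxi Htr [T HT].
  pose proof (Pt_of n m delta B1 x Hm T HT) as HP.
  pose proof (inv n m eps delta B1 xi x Hm HB Heps Hdel Hxi Htr T HP) as Hinv.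
  split; intros e He.
  - exists (S T). intros t Ht. destruct t as [|t]; [lia|].
    replace t with ((t - T) + T)%nat by lia.
    pose proof (diam_step n m eps delta B1 xi x Hm Heps Hdel Hxi Htr _ (Hinv (t - T)%nat)). lra.
  - exists T. intros t Ht. replace t with ((t - T) + T)%nat by lia.
    pose proof (devB_bound n m eps delta B1 x Hm Hdel _ (Hinv (t - T)%nat)). simpl in *. lra.
Qed.
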